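(* Let $p$ be a prime, $0\le i\le p-1$, $r\ge0$ an integer, and $k$ a positive integer not divisible by $p$. Then $|Q_{i,r}^{(k)}|_m\le p^{(r+1)/2}=\sqrt{p(d_r+1)}$, where $d_r=p^r-1$.
   Context: Fix a prime $p$ and a primitive $p$-th root of unity $\xi$. Let $D$ be the $p\times p$ matrix $D_{j,l}=\xi^{jl}$, $j,l\in\{0,\dots,p-1\}$. Define polynomials $Q_{0,r},\dots,Q_{p-1,r}\in\mathbb{C}[x]$ recursively: $Q_{j,0}:=1$ for all $j$, and for $r\ge0$, $$(Q_{0,r+1},Q_{1,r+1},\dots,Q_{p-1,r+1})^T:=D\cdot\big(Q_{0,r},\,x^{p^r}Q_{1,r},\,x^{2p^r}Q_{2,r},\dots,x^{(p-1)p^r}Q_{p-1,r}\big)^T.$$ Each $Q_{j,r}$ has degree $d_r=p^r-1$ and all coefficients of absolute value 1. For a complex polynomial $g(x)=\sum_ia_ix^i$, $|g|_m:=\max_{|x|=1}|g(x)|$ and $g^{(k)}(x):=\sum_ia_i^kx^i$ (Hadamard power). *)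

(* Defs.v *)
From HB Require Import structures.
From mathcomp Require Import all_boot all_order all_algebra.
Set Implicit Arguments. Unset Strict Implicit. Unset Printing Implicit Defensive.
Import Order.TTheory GRing.Theory Num.Theory.
Local Open Scope ring_scope.

(* Q p xi r j  =  Q_{j,r} for the prime p and the primitive p-th root xi.
   Q_{j,0} = 1, and
   Q_{j,r+1} = sum_{l<p} D_{j,l} * x^{l p^r} Q_{l,r}  with D_{j,l} = xi^{j l}
   (this is the j-th entry of D * (Q_{0,r}, x^{p^r} Q_{1,r}, ...)^T). *)
Fixpoint Q (C : numClosedFieldType) (p : nat) (xi : C) (r : nat) : nat -> {poly C} :=
  match r with
  | 0 => fun _ => 1
  | r'.+1 => fun j =>
      \sum_(l < p) (xi ^+ (j * l)) *: ('X^(l * p ^ r') * Q p xi r' l)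
  end.

Definition hadamard_pow (C : numClosedFieldType) (k : nat) (g : {poly C}) : {poly C} :=
  map_poly (fun a : C => a ^+ k) g.

(* Main.v *)
Require Import Defs.
From HB Require Import structures.
From mathcomp Require Import all_boot all_order all_algebra.
From mathcomp Require Import zify.
Import Order.TTheory GRing.Theory Num.Theory.
Local Open Scope ring_scope.

Section S.
Variables (C : numClosedFieldType) (p : nat) (p_gt0 : (0 < p)%N).

Lemma Q_collapse (xi : C) r j n :
  (forall l m, (p ^ r <= m)%N -> (Q p xi r l)`_m = 0) ->
  (Q p xi r.+1 j)`_n = if (n %/ p ^ r < p)%N
     then xi ^+ (j * (n %/ p ^ r)) * (Q p xi r (n %/ p ^ r))`_(n %% p ^ r) else 0.
Proof.
move=> H /=; rewrite coef_sum.
have N0 : (0 < p ^ r)%N by rewrite expn_gt0 p_gt0.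
set q := (n %/ p ^ r)%N.
have E : forall l : 'I_p, (xi ^+ (j * l) *: ('X^(l * p ^ r) * Q p xi r l))`_n =
   if (l == q :> nat) then xi ^+ (j * q) * (Q p xi r q)`_(n %% p ^ r) else 0.
  move=> l; rewrite coefZ coefXnM.
  case: eqP => [->|ne].
    have -> : (n < q * p ^ r)%N = false by rewrite ltnNge leq_trunc_div.
    by rewrite {1}(divn_eq n (p ^ r)) -/q addKn.
  case: ltnP => [_|le]; first by rewrite mulr0.
  rewrite H ?mulr0 //.
  have : (l < q)%N.
    rewrite ltn_neqAle; apply/andP; split; first by apply/eqP.
    by rewrite leq_divRL.
  rewrite -/q => lt.
  have : (l.+1 <= q)%N by [].
  rewrite /q leq_divRL // mulSn => h.
  move: le h; set a := (l * p ^ r)%N; set b := (p ^ r)%N; lia.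
rewrite (eq_bigr _ (fun l _ => E l)).
case: ltnP => [qp|qp].
  rewrite (bigD1 (Ordinal qp)) //= eqxx big1 ?addr0 // => l /eqP ne.
  case: eqP => // e; exfalso; apply: ne; exact: val_inj.
rewrite big1 // => l _; case: eqP => // e.
by move: (ltn_ord l); rewrite e ltnNge qp.
Qed.

Lemma Q_vanish (xi : C) r l m : (p ^ r <= m)%N -> (Q p xi r l)`_m = 0.
Proof.
elim: r l m => [|r IH] l m hm.
  by rewrite /= coef1; case: eqP => // e; move: hm; rewrite e.
rewrite Q_collapse //.
have N0 : (0 < p ^ r)%N by rewrite expn_gt0 p_gt0.
by rewrite ltnNge leq_divRL // -expnS hm.
Qed.

Lemma Q_had (xi : C) k r j : (0 < k)%N ->
  hadamard_pow k (Q p xi r j) = Q p (xi ^+ k) r j.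
Proof.
move=> k0; apply/polyP => n; rewrite /hadamard_pow coef_map_id0; last by rewrite expr0n (gtn_eqF k0).
elim: r j n => [|r IH] j n.
  by rewrite /= !coef1; case: eqP => _; rewrite ?expr1n // expr0n (gtn_eqF k0).
rewrite !Q_collapse; try by move=> *; apply: Q_vanish.
case: ifP => _; last by rewrite expr0n (gtn_eqF k0).
by rewrite exprMn IH -!exprM mulnC.
Qed.
End S.
Section S2.
Variables (C : numClosedFieldType) (p : nat) (xi : C).
Hypothesis (p_gt0 : (0 < p)%N) (prim : p.-primitive_root xi).

Lemma geo0 (w : C) : w ^+ p = 1 -> w != 1 -> \sum_(j < p) w ^+ j = 0.
Proof.
move=> h n1; have := subrX1 w p; rewrite h subrr => /esym/eqP.
by rewrite mulf_eq0 subr_eq0 (negbTE n1) => /eqP.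
Qed.

Lemma xi_conj : xi * xi^* = 1.
Proof.
rewrite -normCK; have h : `|xi| ^+ p = 1 by rewrite -normrX prim_expr_order // normr1.
have /eqP -> : `|xi| == 1 by rewrite -(pexpr_eq1 p_gt0) ?normr_ge0 // h.
by rewrite expr1n.
Qed.

Lemma inner_sum (l m : 'I_p) :
  \sum_(j < p) (xi ^+ l * xi^* ^+ m) ^+ j = if l == m then p%:R else 0.
Proof.
case: eqP => [->|ne].
  rewrite -exprMn xi_conj expr1n.
  rewrite (eq_bigr (fun _ => 1)) ?sumr_const ?card_ord // => j _; exact: expr1n.
apply: geo0.
  rewrite exprMn -!exprM (mulnC l) (mulnC m) !exprM -rmorphXn (prim_expr_order prim).
  by rewrite rmorph1 !expr1n mulr1.
apply/eqP => h; apply: ne.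
have : xi ^+ l = xi ^+ m.
  have e : xi ^+ l = (xi ^+ l * xi^* ^+ m) * xi ^+ m.
    by rewrite -mulrA -exprMn [xi^* * xi]mulrC xi_conj expr1n mulr1.
  by rewrite e h mul1r.
move/eqP; rewrite (eq_prim_root_expr prim) !modn_small // => /eqP; exact: val_inj.
Qed.

Lemma orth (a : nat -> C) :
  \sum_(j < p) `|\sum_(l < p) xi ^+ (j * l) * a l| ^+ 2 =
  p%:R * \sum_(l < p) `|a l| ^+ 2.
Proof.
have E : forall j : 'I_p, `|\sum_(l < p) xi ^+ (j * l) * a l| ^+ 2 =
   \sum_(l < p) \sum_(m < p) ((xi ^+ l * xi^* ^+ m) ^+ j * (a l * (a m)^*)).
  move=> j; rewrite normCK rmorph_sum mulr_suml; apply: eq_bigr => l _.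
  rewrite mulr_sumr; apply: eq_bigr => m _.
  rewrite rmorphM rmorphXn mulrACA exprMn -!exprM [(l * j)%N]mulnC [(m * j)%N]mulnC.
  by [].
rewrite (eq_bigr _ (fun j _ => E j)) exchange_big mulr_sumr; apply: eq_bigr => l _.
rewrite exchange_big (bigD1 l) //= [X in _ + X]big1 ?addr0.
  by rewrite -mulr_suml inner_sum eqxx normCK.
move=> m ne; rewrite -mulr_suml inner_sum eq_sym (negbTE ne) mul0r //.
Qed.

Lemma Ssum (x : C) r : `|x| = 1 ->
  \sum_(j < p) `|(Q p xi r j).[x]| ^+ 2 = p%:R ^+ r.+1.
Proof.
move=> x1; elim: r => [|r IH].
  rewrite /= (eq_bigr (fun _ => 1)) ?sumr_const ?card_ord ?expr1 //.
  by move=> j _; rewrite hornerC normr1 expr1n.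
have E : forall j : 'I_p, (Q p xi r.+1 j).[x] =
  \sum_(l < p) xi ^+ (j * l) * (x ^+ (l * p ^ r) * (Q p xi r l).[x]).
  move=> j; rewrite /= horner_sum; apply: eq_bigr => l _.
  by rewrite hornerZ hornerM hornerXn.
rewrite (eq_bigr _ (fun j _ => congr1 (fun v => `|v| ^+ 2) (E j))).
rewrite (orth (fun l => x ^+ (l * p ^ r) * (Q p xi r l).[x])).
under eq_bigr do rewrite normrM normrX x1 expr1n mul1r.
by rewrite IH -exprS.
Qed.
End S2.

Theorem proposition4p3 (C : numClosedFieldType) (p : nat) (xi : C)
  (i r k : nat) :
  prime p -> p.-primitive_root xi -> (i <= p - 1)%N ->
  (0 < k)%N -> ~~ (p %| k)%N ->
  forall x : C, `|x| = 1 ->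
    `|(hadamard_pow k (Q p xi r i)).[x]| <= sqrtC (p%:R) ^+ r.+1.
Proof.
move=> pp prim ip k0 nd x x1.
have p0 : (0 < p)%N by apply: prime_gt0.
have ilt : (i < p)%N by lia.
rewrite Q_had //.
have prim' : p.-primitive_root (xi ^+ k).
  by rewrite prim_root_exp_coprime // coprime_sym prime_coprime.
rewrite -(ler_pXn2r (n:=2)) //; last by rewrite qualifE /= exprn_ge0 // sqrtC_ge0 ler0n.
  rewrite -exprM mulnC exprM sqrtCK -(@Ssum C p (xi ^+ k) p0 prim' x r x1).
  rewrite (bigD1 (Ordinal ilt)) //= lerDl sumr_ge0 // => j _.
  by rewrite exprn_ge0.
by rewrite qualifE /= normr_ge0.
Qed.
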